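(* For integers $0\le s\le n$, \[ \operatorname{Cat}_{(2n+1-s,s)}=\sum_{i=0}^s \operatorname{Mot}_{(i+n-s,\,n-s)}\binom{n}{s-i},\qquad \operatorname{Cat}_{(2n-s,s)}=\sum_{i=0}^s \operatorname{Rior}_{(i+n-s,\,n-s)}\binom{n}{s-i}. \]
   Context: The Catalan triangle numbers are $\operatorname{Cat}_{(a,b)}=\binom{a+b}{b}-\binom{a+b}{b-1}$ for $0\le b\le a$ and $0$ otherwise. A Motzkin path is a lattice path with steps $U=(1,1)$, $H=(1,0)$, $D=(1,-1)$ starting at $(0,0)$ and staying weakly above the line $y=0$. The Motzkin triangle number $\operatorname{Mot}_{(a,k)}$ is the number of Motzkin paths from $(0,0)$ to $(a,k)$ (so $\operatorname{Mot}_{(a,a)}=1$ and $\operatorname{Mot}_{(a,0)}$ is the $a$-th Motzkin number). The Riordan triangle number $\operatorname{Rior}_{(a,k)}$ is the number of Motzkin paths from $(0,0)$ to $(a,k)$ having no $H$ step on the line $y=0$ (so $\operatorname{Rior}_{(a,a)}=1$, $\operatorname{Rior}_{(1,0)}=0$). *)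

(* Defs.v *)
From HB Require Import structures.
From mathcomp Require Import all_boot all_order all_algebra.
Set Implicit Arguments. Unset Strict Implicit. Unset Printing Implicit Defensive.
Import GRing.Theory Num.Theory.
Local Open Scope ring_scope.

(* Catalan triangle: Cat_(a,b) = C(a+b,b) - C(a+b,b-1) for 0 <= b <= a, 0 otherwise,
   with the convention C(m,-1) = 0.  Valued in int to avoid truncated subtraction. *)
Definition Cat (a b : nat) : int :=
  if (b <= a)%N then
    match b with
    | 0 => 1
    | b'.+1 => ('C(a + b, b))%:Z - ('C(a + b, b'))%:Z
    end
  else 0.

(* Steps of a Motzkin path, encoded in 'I_3:  0 = U = (1,1),  1 = H = (1,0),
   2 = D = (1,-1). *)
Definition stepU : nat := 0.
Definition stepH : nat := 1.
Definition stepD : nat := 2.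

(* [mpath noH0 h s k]: the step sequence s, started at height h, stays weakly
   above y = 0 and ends at height k; if noH0 is true, moreover no H step is
   taken on the line y = 0. *)
Fixpoint mpath (noH0 : bool) (h : nat) (s : seq 'I_3) (k : nat) : bool :=
  match s with
  | [::] => h == k
  | x :: s' =>
      if val x == stepU then mpath noH0 h.+1 s' k
      else if val x == stepH then (~~ noH0 || (h != 0)%N) && mpath noH0 h s' k
      else (h != 0)%N && mpath noH0 h.-1 s' k
  end.

Definition Mot (a k : nat) : nat :=
  #|[set p : a.-tuple 'I_3 | mpath false 0 p k]|.

Definition Rior (a k : nat) : nat :=
  #|[set p : a.-tuple 'I_3 | mpath true 0 p k]|.

(* Main.v *)
Require Import Defs.
From HB Require Import structures.
From mathcomp Require Import all_boot all_order all_algebra.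
From mathcomp Require Import zify ring lra.
Import GRing.Theory Num.Theory.

Fixpoint cnt (b : bool) (h m k : nat) : nat :=
  match m with
  | 0 => (h == k : nat)
  | m'.+1 => cnt b h.+1 m' k + (if ~~ b || (h != 0) then cnt b h m' k else 0)
             + (if h != 0 then cnt b h.-1 m' k else 0)
  end.

Lemma cntS b h m k : cnt b h m.+1 k = cnt b h.+1 m k + (if ~~ b || (h != 0) then cnt b h m k else 0)
             + (if h != 0 then cnt b h.-1 m k else 0).
Proof. by []. Qed.

Lemma cnt_last b m h k : cnt b h m.+1 k =
  (if k != 0 then cnt b h m k.-1 else 0) + (if ~~ b || (k != 0) then cnt b h m k else 0)
  + cnt b h m k.+1.
Proof.
elim: m h k => [|m IH] h k.
  rewrite /=. case: b; case: h => [|h]; case: k => [|[|k]] //=; rewrite ?eqSS;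
  do ? case: eqP; lia.
rewrite [in RHS]cntS [in RHS]cntS [in RHS]cntS [LHS]cntS !IH.
case: b IH => IH; case: h => [|h]; case: k => [|[|k]] /=; lia.
Qed.

Lemma cnt_small b m h k : (h + m < k)%N -> cnt b h m k = 0.
Proof.
elim: m h => [|m IH] h /=.
  by rewrite addn0 => hk; case: eqP => // E; rewrite E ltnn in hk.
move=> hk; rewrite (IH h.+1); last by lia.
rewrite (IH h); last by lia.
case: h hk => [|h] hk /=; first by rewrite !if_same.
rewrite IH //; last by lia.
by rewrite !if_same.
Qed.
Lemma card_sum m (P : pred (m.-tuple 'I_3)) :
  #|[set p | P p]| = \sum_(p : m.-tuple 'I_3) (P p : nat).
Proof.
rewrite -sum1_card big_mkcond /=; apply: eq_bigr => p _; rewrite inE; by case: (P p).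
Qed.

Lemma sum_tuple_cons m (F : m.+1.-tuple 'I_3 -> nat) :
  \sum_(p : m.+1.-tuple 'I_3) F p =
  \sum_(x : 'I_3) \sum_(t : m.-tuple 'I_3) F [tuple of x :: t].
Proof.
rewrite pair_big /=.
rewrite (reindex (fun xt : 'I_3 * m.-tuple 'I_3 => [tuple of xt.1 :: xt.2])) //=.
exists (fun p => (thead p, behead_tuple p)).
  by move=> [x t] _ /=; rewrite theadE; congr pair; apply: val_inj.
by move=> p _ /=; rewrite [RHS]tuple_eta.
Qed.

Lemma sum0F (T : finType) : \sum_(t : T) (false : nat) = 0.
Proof. by rewrite big1. Qed.

Lemma cnt_card b m h k :
  #|[set p : m.-tuple 'I_3 | mpath b h p k]| = cnt b h m k.
Proof.
elim: m h => [|m IH] h.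
  rewrite card_sum (eq_bigr (fun _ => ((h == k) : nat))); last first.
    by move=> p _; rewrite tuple0.
  by rewrite sum_nat_const card_tuple expn0 mul1n.
rewrite (@card_sum m.+1 (fun p : (m.+1).-tuple 'I_3 => mpath b h p k)) sum_tuple_cons big_ord_recl big_ord_recl big_ord_recl big_ord0 addn0 /=.
rewrite -!IH !card_sum addnA.
case: (~~ b || (h != 0)); case: (h != 0) => /=. all: by rewrite ?sum0F ?addn0.
Qed.
Local Open Scope ring_scope.

Definition cz (N : nat) (d : int) : int :=
  match d with Posz k => ('C(N, k))%:Z | Negz _ => 0 end.

Lemma cz_lt0 N d : d < 0 -> cz N d = 0.
Proof. by case: d. Qed.

Lemma czS N d : cz N.+1 d = cz N d + cz N (d - 1).
Proof.
case: d => [[|k]|k].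
- by rewrite [cz N (0 - 1)]cz_lt0 //= !bin0 addr0.
- have -> : (Posz k.+1 - 1 = Posz k) by lia.
  by rewrite /= binS PoszD addrC.
- by rewrite !cz_lt0 //; lia.
Qed.

Lemma cz2 N d : cz N.+2 d = cz N (d - 2) + 2 * cz N (d - 1) + cz N d.
Proof.
rewrite !czS; have -> : d - 1 - 1 = d - 2 by ring.
ring.
Qed.

Definition G1 (n : nat) (k : int) : int :=
  cz (2 * n).+1 (n%:Z - k) - cz (2 * n).+1 (n%:Z - k - 1).
Definition G2 (n : nat) (k : int) : int :=
  cz (2 * n) (n%:Z - k) - cz (2 * n) (n%:Z - k - 1).

Lemma G1rec n k : G1 n.+1 k = G1 n (k - 1) + 2 * G1 n k + G1 n (k + 1).
Proof.
rewrite /G1.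
have -> : (2 * n.+1).+1 = (2 * n).+1.+2 by rewrite mulnS addSn add1n.
rewrite !cz2.
have -> : n.+1%:Z - k - 2 = n%:Z - k - 1 by lia.
have -> : n.+1%:Z - k - 1 = n%:Z - k by lia.
have -> : n%:Z - (k - 1) - 1 = n%:Z - k by lia.
have -> : n%:Z - (k - 1) = n%:Z - k + 1 by lia.
have -> : n.+1%:Z - k = n%:Z - k + 1 by lia.
have -> : n%:Z - (k + 1) - 1 = n%:Z - k - 1 - 1 by lia.
have -> : n%:Z - (k + 1) = n%:Z - k - 1 by lia.
have -> : n%:Z - k - 2 = n%:Z - k - 1 - 1 by lia.
ring.
Qed.

Lemma G2rec n k : G2 n.+1 k = G2 n (k - 1) + 2 * G2 n k + G2 n (k + 1).
Proof.
rewrite /G2.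
have -> : (2 * n.+1 = (2 * n).+2)%N by rewrite mulnS addSn add1n.
rewrite !cz2.
have -> : n.+1%:Z - k - 2 = n%:Z - k - 1 by lia.
have -> : n.+1%:Z - k - 1 = n%:Z - k by lia.
have -> : n%:Z - (k - 1) - 1 = n%:Z - k by lia.
have -> : n%:Z - (k - 1) = n%:Z - k + 1 by lia.
have -> : n.+1%:Z - k = n%:Z - k + 1 by lia.
have -> : n%:Z - (k + 1) - 1 = n%:Z - k - 1 - 1 by lia.
have -> : n%:Z - (k + 1) = n%:Z - k - 1 by lia.
have -> : n%:Z - k - 2 = n%:Z - k - 1 - 1 by lia.
ring.
Qed.

Lemma G1m1 n : G1 n (-1) = 0.
Proof.
rewrite /G1.
have -> : n%:Z - -1 = Posz n.+1 by lia.
have -> : n.+1%:Z - 1 = Posz n by lia.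
rewrite /= -(@bin_sub (2 * n).+1 n.+1); last by lia.
have -> : ((2 * n).+1 - n.+1 = n)%N by lia.
by rewrite subrr.
Qed.

Lemma G2m1 n : G2 n (-1) = - G2 n 0.
Proof.
rewrite /G2.
have -> : n%:Z - -1 - 1 = Posz n by lia.
have -> : n%:Z - -1 = Posz n.+1 by lia.
have -> : n%:Z - 0 = Posz n by lia.
case: n => [|n].
  by rewrite [cz _ (0 - 1)]cz_lt0 //= bin0 subr0.
have -> : n.+1%:Z - 1 = Posz n by lia.
rewrite /= -(@bin_sub (2 * n.+1) n.+2); last by lia.
have -> : ((2 * n.+1) - n.+2 = n)%N by lia.
ring.
Qed.

Local Open Scope nat_scope.

Definition Fs b n k := \sum_(0 <= m < n.+1) 'C(n, m) * cnt b 0 m k.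

Lemma Fs_rec b n k : Fs b n.+1 k = Fs b n k + \sum_(0 <= m < n.+1) 'C(n, m) * cnt b 0 m.+1 k.
Proof.
rewrite /Fs big_nat_recl // bin0.
under eq_bigr do rewrite binS mulnDl.
rewrite big_split /= addnA; congr (_ + _).
rewrite [in RHS]big_nat_recl // bin0 big_nat_recr //= bin_small // mul0n addn0.
by [].
Qed.

Lemma Fs_rec2 b n k : Fs b n.+1 k =
  Fs b n k + ((if k != 0 then Fs b n k.-1 else 0) + (if ~~ b || (k != 0) then Fs b n k else 0)
  + Fs b n k.+1).
Proof.
rewrite Fs_rec; congr (_ + _).
under eq_bigr do rewrite cnt_last.
rewrite /Fs; case: b; case: k => [|k] /=;
  under eq_bigr do rewrite ?muln0 ?addn0 ?add0n ?mulnDr;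
  by rewrite ?big_split.
Qed.

Lemma Fs0 b k : Fs b 0 k = (0 == k).
Proof. by rewrite /Fs big_nat1 bin0 mul1n. Qed.

Lemma Fs_G1 n k : (Fs false n k)%:Z = G1 n k.
Proof.
elim: n k => [|n IH] k.
  rewrite Fs0 /G1; case: k => [|k].
    by [].
  by rewrite !cz_lt0 //; lia.
rewrite Fs_rec2 G1rec; case: k => [|k] /=; rewrite !PoszD !IH.
  have -> : (Posz 0 - 1 = -1)%R by [].
  have -> : (Posz 0 + 1 = 1)%R by [].
  rewrite G1m1; ring.
have -> : (Posz k.+1 - 1 = Posz k)%R by lia.
have -> : (Posz k.+1 + 1 = Posz k.+2)%R by lia.
ring.
Qed.

Lemma Fs_G2 n k : (Fs true n k)%:Z = G2 n k.
Proof.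
elim: n k => [|n IH] k.
  rewrite Fs0 /G2; case: k => [|k].
    by [].
  by rewrite !cz_lt0 //; lia.
rewrite Fs_rec2 G2rec; case: k => [|k] /=; rewrite !PoszD !IH.
  have -> : (Posz 0 - 1 = -1)%R by [].
  have -> : (Posz 0 + 1 = 1)%R by [].
  rewrite G2m1; ring.
have -> : (Posz k.+1 - 1 = Posz k)%R by lia.
have -> : (Posz k.+1 + 1 = Posz k.+2)%R by lia.
ring.
Qed.

Lemma Cat_G1 n s : s <= n -> Cat (2 * n + 1 - s) s = G1 n (n - s)%N.
Proof.
move=> hs; rewrite /Cat /G1 ifT; last by lia.
have -> : (n%:Z - Posz (subn n s) = Posz s)%R by lia.
case: s hs => [|s] hs.
  by rewrite [cz _ (0 - 1)]cz_lt0 //= bin0 subr0.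
have -> : (Posz s.+1 - 1 = Posz s)%R by lia.
by rewrite /= (_ : 2 * n + 1 - s.+1 + s.+1 = (2 * n).+1) //; lia.
Qed.

Lemma Cat_G2 n s : s <= n -> Cat (2 * n - s) s = G2 n (n - s)%N.
Proof.
move=> hs; rewrite /Cat /G2 ifT; last by lia.
have -> : (n%:Z - Posz (subn n s) = Posz s)%R by lia.
case: s hs => [|s] hs.
  by rewrite [cz _ (0 - 1)]cz_lt0 //= bin0 subr0.
have -> : (Posz s.+1 - 1 = Posz s)%R by lia.
by rewrite /= (_ : 2 * n - s.+1 + s.+1 = (2 * n)) //; lia.
Qed.

Lemma Posz_sum (I : Type) (r : seq I) (P : pred I) (F : I -> nat) :
  Posz (\sum_(i <- r | P i) F i) = (\sum_(i <- r | P i) Posz (F i))%R.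
Proof. exact: (big_morph Posz PoszD (erefl _)). Qed.

Lemma sum_Fs b n s : s <= n ->
  (\sum_(i < s.+1) (cnt b 0 (i + n - s) (n - s))%:Z * ('C(n, s - i))%:Z)%R
  = (Fs b n (n - s))%:Z.
Proof.
move=> hs; have [k ->] : exists k, n = k + s by exists (n - s); rewrite subnK.
rewrite addnK /Fs Posz_sum.
rewrite (@big_cat_nat _ _ _ k) //=; last by lia.
rewrite [X in (_ = X + _)%R]big1_seq ?add0r; last first.
  move=> i; rewrite mem_index_iota => /andP [_ hi].
  by rewrite cnt_small ?muln0 //; lia.
rewrite (big_addn 0 _ k) (_ : (k + s).+1 - k = s.+1); last by lia.
rewrite big_mkord; apply: eq_bigr => i _.
rewrite -PoszM mulnC; congr (Posz (_ * _)).
rewrite -(@bin_sub (k + s) (i + k)); last by (have := ltn_ord i; lia).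
  by congr binomial; lia.
by rewrite addnA addnK.
Qed.

Local Open Scope ring_scope.

Theorem proposition5p15 (n s : nat) (hsn : (s <= n)%N) :
  Cat (2 * n + 1 - s) s =
    \sum_(i < s.+1) (Mot (i + n - s) (n - s))%:Z * ('C(n, s - i))%:Z
  /\
  Cat (2 * n - s) s =
    \sum_(i < s.+1) (Rior (i + n - s) (n - s))%:Z * ('C(n, s - i))%:Z.
Proof.
rewrite /Mot /Rior.
under eq_bigr do rewrite cnt_card.
under [X in _ /\ _ = X]eq_bigr do rewrite cnt_card.
by rewrite !sum_Fs // Fs_G1 Fs_G2 Cat_G1 // Cat_G2.
Qed.
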